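(* Let $D$ be an integral domain. Then $t\text{-}\dim(D)\le t\text{-}\dim(D[X]_A)\le t\text{-}\dim(D[X])$.
   Context: $X$ is an indeterminate over $D$, $A=\{f\in D[X]\mid f(0)=1\}$, and $D[X]_A$ is the localization at $A$. For an integral domain $E$ with quotient field $K$ and a nonzero fractional ideal $I$, let $I^{-1}=\{x\in K\mid xI\subseteq E\}$, $I_v=(I^{-1})^{-1}$, and $I_t=\bigcup J_v$ where $J$ ranges over the nonzero finitely generated fractional ideals contained in $I$. An ideal $I$ is a $t$-ideal if $I_t=I$; a prime $t$-ideal is a prime ideal that is a $t$-ideal; a maximal $t$-ideal is maximal among proper $t$-ideals. The $t$-height of a prime $t$-ideal $P$ is the supremum of $n$ such that there is a chain $P=P_0\supsetneq P_1\supsetneq\cdots\supsetneq P_n=(0)$ of prime $t$-ideals (with $(0)$ at the bottom), and $t\text{-}\dim(E)=\sup\{t\text{-ht}(P)\mid P \text{ a maximal } t\text{-ideal of } E\}$. *)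

(* Defs.v *)
From HB Require Import structures.
From mathcomp Require Import all_boot all_algebra.
From mathcomp Require Import fraction.
Set Implicit Arguments. Unset Strict Implicit. Unset Printing Implicit Defensive.
Import GRing.Theory.
Local Open Scope ring_scope.

(* An integral domain E is represented as a subring E of its quotient
   field K (E : K -> Prop).  All ideals, fractional ideals, etc. are
   subsets of K. *)
Section TIdeals.
Variable K : fieldType.
Variable E : K -> Prop.

Definition subsetK (I J : K -> Prop) := forall x, I x -> J x.
Definition eqsetK (I J : K -> Prop) := forall x, I x <-> J x.

Definition Esubmodule (I : K -> Prop) :=
  I 0 /\ (forall x y, I x -> I y -> I (x + y)) /\
  (forall a x, E a -> I x -> I (a * x)).

Definition nonzero_set (I : K -> Prop) := exists x, I x /\ x != 0.

Definition frac_ideal (I : K -> Prop) :=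
  Esubmodule I /\ nonzero_set I /\
  exists d, E d /\ d != 0 /\ forall x, I x -> E (d * x).

Definition inv_ideal (I : K -> Prop) : K -> Prop :=
  fun x => forall y, I y -> E (x * y).

Definition v_ideal (I : K -> Prop) : K -> Prop := inv_ideal (inv_ideal I).

Definition span_of (s : seq K) : K -> Prop :=
  fun x => exists c : seq K, size c = size s /\ (forall i, (i < size c)%N -> E c`_i) /\
    x = \sum_(i < size s) c`_i * s`_i.

Definition fg_frac_ideal (J : K -> Prop) :=
  frac_ideal J /\ exists s : seq K, eqsetK J (span_of s).

Definition t_ideal_op (I : K -> Prop) : K -> Prop :=
  fun x => exists J, fg_frac_ideal J /\ subsetK J I /\ v_ideal J x.

Definition is_t_ideal (I : K -> Prop) := frac_ideal I /\ eqsetK (t_ideal_op I) I.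

Definition ideal (I : K -> Prop) := Esubmodule I /\ subsetK I E.

Definition proper (I : K -> Prop) := ~ I 1.

Definition prime_ideal (P : K -> Prop) :=
  ideal P /\ proper P /\
  forall a b, E a -> E b -> P (a * b) -> P a \/ P b.

Definition prime_t_ideal (P : K -> Prop) := prime_ideal P /\ is_t_ideal P.

Definition max_t_ideal (M : K -> Prop) :=
  ideal M /\ proper M /\ is_t_ideal M /\
  forall N, ideal N -> proper N -> is_t_ideal N -> subsetK M N -> eqsetK N M.

Definition zero_set : K -> Prop := fun x => x = 0.

Definition t_chain (P : K -> Prop) (n : nat) :=
  exists Q : nat -> (K -> Prop),
    Q 0%N = P /\ eqsetK (Q n) zero_set /\
    (forall i, (i < n)%N -> prime_t_ideal (Q i)) /\
    (forall i, (i < n)%N -> subsetK (Q i.+1) (Q i) /\ ~ subsetK (Q i) (Q i.+1)).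

(* "t-dim(E) >= n" : t-dim(E) = sup over maximal t-ideals P of t-ht(P),
   t-ht(P) = sup of lengths of chains; the sup of the empty set is 0. *)
Definition tdim_ge (n : nat) :=
  n = 0%N \/ exists M, max_t_ideal M /\ t_chain M n.

End TIdeals.

(* t-dim(E) <= t-dim(F), allowing infinite values *)
Definition tdim_le (K1 : fieldType) (E1 : K1 -> Prop)
  (K2 : fieldType) (E2 : K2 -> Prop) :=
  forall n : nat, tdim_ge E1 n -> tdim_ge E2 n.

Definition dom_in_frac (D : idomainType) : {fraction D} -> Prop :=
  fun x => exists a : D, x = FracField.tofrac a.

Definition polyring_in_frac (D : idomainType) : {fraction {poly D}} -> Prop :=
  fun x => exists f : {poly D}, x = FracField.tofrac f.

Definition setA (D : idomainType) (f : {poly D}) := f.[0] = 1.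

Definition polyloc_A (D : idomainType) : {fraction {poly D}} -> Prop :=
  fun x => exists f g : {poly D}, setA g /\
    x = FracField.tofrac f / FracField.tofrac g.

(* Main.v *)
Require Import Defs.
From mathcomp Require Import all_boot all_algebra fraction.
From mathcomp Require classical_sets.
From Stdlib Require Import Classical PropExtensionality FunctionalExtensionality.
From mathcomp Require Import zify.
Set Implicit Arguments. Unset Strict Implicit. Unset Printing Implicit Defensive.
Import GRing.Theory.
Local Open Scope ring_scope.

Lemma eqsetK_eq (K : fieldType) (I J : K -> Prop) : eqsetK I J -> I = J.
Proof. move=> h; apply: functional_extensionality => x; apply: propositional_extensionality; exact: h. Qed.

Section Generic.
Variable K : fieldType.
Variable E : K -> Prop.
Hypothesis E0 : E 0.
Hypothesis E1 : E 1.
Hypothesis ED : forall x y, E x -> E y -> E (x + y).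
Hypothesis EM : forall x y, E x -> E y -> E (x * y).

Lemma span_nil x : span_of E [::] x <-> x = 0.
Proof.
split.
  by case=> c [_ [_ ->]]; rewrite big_ord0.
move=> ->; exists [::]; split=> //; split=> //; by rewrite big_ord0.
Qed.

Lemma span_cons a s x : span_of E (a :: s) x <->
  exists c w, E c /\ span_of E s w /\ x = c * a + w.
Proof.
split.
  case=> [[|c0 c] [sz [hc ->]]] //=.
  exists c0, (\sum_(i < size s) c`_i * s`_i); split; first exact: (hc 0%N).
  split; last by rewrite big_ord_recl.
  exists c; split; first by case: sz.
  by split=> // i hi; apply: (hc i.+1).
case=> c [w [hc [[cw [sz [hcw ->]]] ->]]].
exists (c :: cw); split; first by rewrite /= sz.
split; first by case=> [|i] //= hi; apply: hcw.
by rewrite /= big_ord_recl.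
Qed.

Lemma span_ind (P : seq K -> K -> Prop) :
  (P [::] 0) ->
  (forall a s c w, E c -> span_of E s w -> P s w -> P (a :: s) (c * a + w)) ->
  forall s x, span_of E s x -> P s x.
Proof.
move=> h0 hc; elim=> [|a s IH] x.
  by move/span_nil=> ->.
case/span_cons=> c [w [hcE [hw ->]]]; apply: hc => //; exact: IH.
Qed.

Lemma span0 s : span_of E s 0.
Proof.
elim: s => [|a s IH]; first by apply/span_nil.
apply/span_cons; exists 0, 0; split=> //; split=> //; by rewrite mul0r addr0.
Qed.

Lemma span_Esub s : Esubmodule E (span_of E s).
Proof.
split; first exact: span0.
split.
  elim: s => [|a s IH] x y.
    by move=> /span_nil -> /span_nil ->; apply/span_nil; rewrite addr0.
  move=> /span_cons [c1 [w1 [h1 [hw1 ->]]]] /span_cons [c2 [w2 [h2 [hw2 ->]]]].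
  apply/span_cons; exists (c1 + c2), (w1 + w2); split; first exact: ED.
  split; first exact: IH.
  by rewrite mulrDl -!addrA; congr (_ + _); rewrite addrCA.
move=> b; elim: s => [|a s IH] x.
  by move=> hb /span_nil ->; apply/span_nil; rewrite mulr0.
move=> hb /span_cons [c [w [hc [hw ->]]]].
apply/span_cons; exists (b * c), (b * w); split; first exact: EM.
split; first exact: IH.
by rewrite mulrDr mulrA.
Qed.

Lemma span_mem s x : x \in s -> span_of E s x.
Proof.
elim: s => [|a s IH] //; rewrite inE => /orP [/eqP ->|hx].
  apply/span_cons; exists 1, 0; split=> //; split; first exact: span0.
  by rewrite mul1r addr0.
apply/span_cons; exists 0, x; split=> //; split; first exact: IH.
by rewrite mul0r add0r.
Qed.

Lemma span_sub (I : K -> Prop) s : Esubmodule E I -> (forall x, x \in s -> I x) ->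
  subsetK (span_of E s) I.
Proof.
move=> [I0 [ID IM]] hs x hx; move: s x hx hs.
apply: (@span_ind (fun s x => (forall z, z \in s -> I z) -> I x)).
  by [].
move=> a s' c w hc _ IH hs; apply: ID.
  by apply: IM => //; apply: hs; rewrite inE eqxx.
by apply: IH => z hz; apply: hs; rewrite inE hz orbT.
Qed.

Lemma inv_span (y : K) s : (forall x, x \in s -> E (y * x)) -> inv_ideal E (span_of E s) y.
Proof.
move=> hs z hz; move: s z hz hs.
apply: (@span_ind (fun s z => (forall x, x \in s -> E (y * x)) -> E (y * z))).
  by rewrite mulr0.
move=> a s' c w hc _ IH hs.
rewrite mulrDr mulrCA; apply: ED.
  by apply: EM => //; apply: hs; rewrite inE eqxx.
by apply: IH => u hu; apply: hs; rewrite inE hu orbT.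
Qed.

Lemma v_incl (J : K -> Prop) x : J x -> v_ideal E J x.
Proof. by move=> hx y hy; rewrite mulrC; apply: hy. Qed.

Lemma v_integral (J : K -> Prop) x : subsetK J E -> v_ideal E J x -> E x.
Proof. by move=> hJ hx; rewrite -[x]mulr1; apply: hx => y hy; rewrite mul1r; apply: hJ. Qed.

Lemma ideal_frac (I : K -> Prop) : ideal E I -> nonzero_set I -> frac_ideal E I.
Proof.
move=> [hI hIE] hnz; split=> //; split=> //.
by exists 1; split=> //; split; [exact: oner_neq0| move=> x hx; rewrite mul1r; apply: hIE].
Qed.

Lemma ideal_sub_top (I : K -> Prop) : ideal E I -> nonzero_set I ->
  forall x, I x -> t_ideal_op E I x.
Proof.
move=> hI [z [hz nz]] x hx.
have hsub : subsetK (span_of E [:: z; x]) I.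
  apply: span_sub; first by case: hI.
  by move=> u; rewrite !inE => /orP [/eqP ->|/eqP ->].
exists (span_of E [:: z; x]); split; last split=> //.
  split; last by exists [:: z; x].
  apply: ideal_frac; first by split; [exact: span_Esub| move=> u /hsub; case: hI => _ h; exact: h].
  by exists z; split=> //; apply: span_mem; rewrite inE eqxx.
by apply: v_incl; apply: span_mem; rewrite !inE eqxx orbT.
Qed.

Lemma t_closed_intro (I : K -> Prop) : ideal E I -> nonzero_set I ->
  (forall J, fg_frac_ideal E J -> subsetK J I -> subsetK (v_ideal E J) I) ->
  is_t_ideal E I.
Proof.
move=> hI hnz hc; split; first exact: ideal_frac.
move=> x; split; last exact: ideal_sub_top.
by case=> J [hJ [hJI hv]]; apply: (hc J).
Qed.

Lemma t_closed_elim (I J : K -> Prop) : is_t_ideal E I -> fg_frac_ideal E J ->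
  subsetK J I -> subsetK (v_ideal E J) I.
Proof. by move=> [_ h] hJ hJI x hx; apply/h; exists J. Qed.


Lemma span_scale b s w : span_of E s w -> span_of E (map (fun u => u * b) s) (w * b).
Proof.
move: s w; apply: (@span_ind (fun s w => span_of E (map (fun u => u * b) s) (w * b))).
  by rewrite mul0r; apply: span0.
move=> a s c w hc _ IH /=; apply/span_cons; exists c, (w * b); split=> //; split=> //.
by rewrite mulrDl mulrA.
Qed.

Lemma ideal_zero : ideal E (@zero_set K).
Proof.
split; last by move=> x ->.
split; first by [].
split; first by move=> x y -> ->; rewrite addr0.
by move=> a x _ ->; rewrite mulr0.
Qed.

Lemma max_prime M : max_t_ideal E M -> prime_ideal E M.
Proof.
move=> [hM [hp [ht hmax]]]; split=> //; split=> // a b ha hb hab.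
case: (classic (M b)) => hMb; [by right| left].
pose N := fun x => E x /\ M (x * b).
have hMid := hM; case: hM => [[M0 [MD MM]] MsubE].
have hN : ideal E N.
  split; last by move=> x [].
  split; first by split=> //; rewrite mul0r.
  split; first by move=> x y [hx1 hx2] [hy1 hy2]; split; [exact: ED| rewrite mulrDl; exact: MD].
  by move=> c x hc [hx1 hx2]; split; [exact: EM| rewrite -mulrA; exact: MM].
have hMN : subsetK M N.
  by move=> x hx; split; [exact: MsubE| rewrite mulrC; exact: MM].
have [z [hz nz]] : nonzero_set M by case: ht => [[_ [h _]] _].
have hNt : is_t_ideal E N.
  apply: t_closed_intro => //; first by exists z; split=> //; exact: hMN.
  move=> J [hJ [s hs]] hJN x hx.
  have hJE : subsetK J E by move=> u /hJN [].
  split; first exact: (v_integral hJE hx).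
  pose J' := span_of E (map (fun u => u * b) s).
  have hJ'M : subsetK J' M.
    apply: span_sub; first by split.
    move=> u /mapP [u' hu' ->]; apply: (proj2 (hJN u' _)); apply/hs; exact: span_mem.
  have hbn : b != 0 by apply/eqP => hb0; apply: hMb; rewrite hb0.
  apply: (t_closed_elim ht _ hJ'M).
    split; last by exists (map (fun u => u * b) s).
    apply: ideal_frac; first by split; [exact: span_Esub| move=> u /hJ'M; exact: MsubE].
    case: hJ => [_ [[w [hw nw]] _]]; exists (w * b); split.
      by apply: span_scale; apply/hs.
    by rewrite mulf_neq0.
  move=> y hy; rewrite -mulrA; apply: hx => u hu.
  rewrite -mulrA mulrCA [b * u]mulrC; apply: hy; apply: span_scale; exact/hs.
have hNp : Defs.proper N by move=> [_ h]; apply: hMb; rewrite -[b]mul1r.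
have h := hmax N hN hNp hNt hMN.
by apply/h.
Qed.

Lemma union_ok (G : (K -> Prop) -> Prop) :
  (exists I, G I) ->
  (forall I1 I2, G I1 -> G I2 -> exists I3, G I3 /\ subsetK I1 I3 /\ subsetK I2 I3) ->
  (forall I, G I -> ideal E I /\ Defs.proper I /\ is_t_ideal E I) ->
  let U := fun x => exists I, G I /\ I x in
  ideal E U /\ Defs.proper U /\ is_t_ideal E U.
Proof.
move=> [I0 hI0] hdir hG U.
have hU : ideal E U.
  split; last by move=> x [I [hI hx]]; have [[_ h] _] := hG I hI; exact: h.
  split; first by exists I0; split=> //; have [[[h _] _] _] := hG I0 hI0.
  split.
    move=> x y [I1 [h1 hx]] [I2 [h2 hy]].
    have [I3 [h3 [s1 s2]]] := hdir I1 I2 h1 h2.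
    have [[[_ [h _]] _] _] := hG I3 h3.
    by exists I3; split=> //; apply: h; [exact: s1| exact: s2].
  move=> a x ha [I [h hx]]; exists I; split=> //.
  by have [[[_ [_ hm]] _] _] := hG I h; apply: hm.
have hnz : nonzero_set U.
  have [_ [_ [[_ [[z [hz nz]] _]] _]]] := hG I0 hI0.
  by exists z; split=> //; exists I0.
split=> //; split.
  by move=> [I [hI h1]]; have [_ [hp _]] := hG I hI; apply: hp.
apply: t_closed_intro => // J [hJ [s hs]] hJU x hx.
have common : forall s' : seq K, (forall z, z \in s' -> U z) ->
    exists I, G I /\ forall z, z \in s' -> I z.
  elim=> [|a s' IH] hsU; first by exists I0.
  have [I1 [h1 ha]] := hsU a (mem_head _ _).
  have hsU' : forall z, z \in s' -> U z by move=> z hz; apply: hsU; rewrite inE hz orbT.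
  have [I2 [h2 hs2]] := IH hsU'.
  have [I3 [h3 [s1 s2]]] := hdir I1 I2 h1 h2.
  exists I3; split=> // z; rewrite inE => /orP [/eqP ->|hz]; [exact: s1| exact: s2 (hs2 z hz)].
have [I [hI hsI]] := common s (fun z hz => hJU z (proj2 (hs z) (span_mem hz))).
have [[hIid _] [_ hIt]] := hG I hI.
exists I; split=> //.
apply: (t_closed_elim hIt (conj hJ (ex_intro _ s hs)) _ hx).
move=> z /hs hz; move: hz; apply: span_sub => //.
Qed.

Lemma exists_max P : ideal E P -> Defs.proper P -> is_t_ideal E P ->
  exists M, max_t_ideal E M /\ subsetK P M.
Proof.
move=> hP hpP htP.
pose PZ := fun A : K -> Prop => let U := fun x => P x \/ A x in
  ideal E U /\ Defs.proper U /\ is_t_ideal E U.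
have := @classical_sets.Zorn_bigcup K PZ.
case.
  move=> F hF htot.
  pose G := fun I : K -> Prop => I = P \/ exists X, F X /\ I = (fun x => P x \/ X x).
  have := @union_ok G.
  case.
  - by exists P; left.
  - move=> I1 I2 [->|[X1 [hX1 ->]]] [->|[X2 [hX2 ->]]].
    + by exists P; split; [left|split].
    + exists (fun x => P x \/ X2 x); split; first by right; exists X2.
      by split=> x hx; [left|].
    + exists (fun x => P x \/ X1 x); split; first by right; exists X1.
      by split=> x hx; [|left].
    + case: (htot X1 X2 hX1 hX2) => hs.
        exists (fun x => P x \/ X2 x); split; first by right; exists X2.
        split=> x; last by [].
        by case=> hx; [left| right; apply: hs].
      exists (fun x => P x \/ X1 x); split; first by right; exists X1.
      split=> x; first by [].
      by case=> hx; [left| right; apply: hs].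
  - by move=> I [->|[X [hX ->]]]; [| exact: hF].
  move=> hUi [hUp hUt]; rewrite /PZ /=.
  have -> : (fun x => P x \/ (classical_sets.bigcup F id) x) =
            (fun x => exists I, G I /\ I x).
    apply: eqsetK_eq => x; split.
      case=> [hx|[X hX hx]]; first by exists P; split=> //; left.
      by exists (fun x => P x \/ X x); split; [right; exists X| right].
    case=> I [[->|[X [hX ->]]] hx]; first by left.
    by case: hx => hx; [left| right; exists X].
  by split.
move=> A [hA hAmax].
exists (fun x => P x \/ A x); split; last by move=> x hx; left.
case: hA => hi [hp ht]; split=> //; split=> //; split=> //.
move=> N hN hNp hNt hsub.
suff hNA : subsetK N A.
  by move=> x; split; [move/hNA; right| apply: hsub].
apply: NNPP => hn.
apply: (hAmax N).
  split; first by move=> x hx; apply: hsub; right.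
  by move=> h; apply: hn => x /h.
rewrite /PZ /=.
have -> : (fun x => P x \/ N x) = N.
  by apply: eqsetK_eq => x; split; [case=> // hx; apply: hsub; left| right].
by split.
Qed.

End Generic.

Lemma transfer (K1 K2 : fieldType) (E1 : K1 -> Prop) (E2 : K2 -> Prop)
  (F : (K1 -> Prop) -> (K2 -> Prop)) :
  E2 0 -> E2 1 -> (forall x y, E2 x -> E2 y -> E2 (x + y)) ->
  (forall x y, E2 x -> E2 y -> E2 (x * y)) -> E1 0 ->
  (forall P, prime_t_ideal E1 P -> prime_t_ideal E2 (F P)) ->
  (forall P Q, subsetK P Q -> subsetK (F P) (F Q)) ->
  (forall P Q, ideal E1 P -> ideal E1 Q -> subsetK (F P) (F Q) -> subsetK P Q) ->
  (forall P, eqsetK P (@zero_set K1) -> eqsetK (F P) (@zero_set K2)) ->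
  tdim_le E1 E2.
Proof.
move=> E20 E21 E2D E2M E10 hF1 hF2 hF3 hF4 n [->|[M [_ [Q [hQ0 [hQn [hpr hstr]]]]]]].
  by left.
case: n hQn hpr hstr => [|m] hQn hpr hstr; first by left.
have hp0 := hF1 _ (hpr 0%N isT).
have [[hid [hpp _]] ht] := hp0.
have [M' [hM' hsub]] := exists_max E20 E21 E2D E2M hid hpp ht.
have hQid : forall i, (i <= m.+1)%N -> ideal E1 (Q i).
  move=> i; rewrite leq_eqVlt => /orP [/eqP ->|hi].
    by rewrite (eqsetK_eq hQn); apply: ideal_zero.
  by case: (hpr i hi) => [[]].
right; exists M'; split=> //.
exists (fun i => if i == 0%N then M' else F (Q i)); split=> //; split.
  by apply: hF4.
split.
  case=> [|i] hi /=.
    by split; [apply: (max_prime E20 E21 E2D E2M hM')| case: hM' => _ [_ []]].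
  exact: hF1 (hpr _ hi).
case=> [|i] hi /=.
  split.
    move=> x hx; apply: hsub; apply: (hF2 (Q 1%N)) hx.
    by case: (hstr 0%N isT).
  move=> h; case: (hstr 0%N isT) => _; apply.
  apply: hF3; [exact: hQid| exact: hQid|].
  by move=> x /hsub /h.
have [h1 h2] := hstr i.+1 hi.
split; first exact: hF2.
move=> h; apply: h2; apply: hF3 => //; [apply: hQid; exact: ltnW| exact: hQid].
Qed.

Section Poly.
Variable D : idomainType.
Local Notation K := {fraction {poly D}}.
Local Notation tf := (@FracField.tofrac {poly D}).
Local Notation R := (@polyloc_A D).
Local Notation S := (@polyring_in_frac D).

Lemma setA_neq0 (g : {poly D}) : setA g -> g != 0.
Proof. by move=> h; apply/eqP => g0; move: h; rewrite /setA g0 horner0 => /eqP; rewrite eq_sym oner_eq0. Qed.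

Lemma tf_neq0 (g : {poly D}) : setA g -> tf g != 0.
Proof. by move=> h; rewrite tofrac_eq0; apply: setA_neq0. Qed.

Lemma setA1 : setA (1 : {poly D}).
Proof. by rewrite /setA hornerC. Qed.

Lemma setAM (g h : {poly D}) : setA g -> setA h -> setA (g * h).
Proof. by rewrite /setA hornerM => -> ->; rewrite mulr1. Qed.

Lemma S0 : S 0. Proof. by exists 0; rewrite tofrac0. Qed.
Lemma S1 : S 1. Proof. by exists 1; rewrite tofrac1. Qed.
Lemma SD x y : S x -> S y -> S (x + y).
Proof. by move=> [f ->] [g ->]; exists (f + g); rewrite tofracD. Qed.
Lemma SM x y : S x -> S y -> S (x * y).
Proof. by move=> [f ->] [g ->]; exists (f * g); rewrite tofracM. Qed.

Lemma R_S x : S x -> R x.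
Proof. by move=> [f ->]; exists f, 1; split; [exact: setA1| rewrite tofrac1 divr1]. Qed.
Lemma R0 : R 0. Proof. exact: R_S S0. Qed.
Lemma R1 : R 1. Proof. exact: R_S S1. Qed.
Lemma RD x y : R x -> R y -> R (x + y).
Proof.
move=> [f1 [g1 [h1 ->]]] [f2 [g2 [h2 ->]]].
exists (f1 * g2 + f2 * g1), (g1 * g2); split; first exact: setAM.
rewrite addf_div ?tf_neq0 //.
by rewrite tofracD (tofracM f1 g2) (tofracM f2 g1) (tofracM g1 g2).
Qed.
Lemma RM x y : R x -> R y -> R (x * y).
Proof.
move=> [f1 [g1 [h1 ->]]] [f2 [g2 [h2 ->]]].
exists (f1 * f2), (g1 * g2); split; first exact: setAM.
by rewrite (tofracM f1 f2) (tofracM g1 g2) mulf_div.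
Qed.
Lemma R_inv (g : {poly D}) : setA g -> R (tf g)^-1.
Proof. by move=> h; exists 1, g; split=> //; rewrite tofrac1 div1r. Qed.
Lemma R_tf (f : {poly D}) : R (tf f). Proof. by apply: R_S; exists f. Qed.

Definition Fc (Q : K -> Prop) : K -> Prop := fun x => Q x /\ S x.

Lemma common_den (y : K) (s : seq K) : (forall x, x \in s -> R (y * x)) ->
  exists g, setA g /\ forall x, x \in s -> S (y * tf g * x).
Proof.
elim: s => [|a s IH] hs.
  by exists 1; split=> //; exact: setA1.
have [g [hg hgs]] : exists g, setA g /\ forall x, x \in s -> S (y * tf g * x).
  by apply: IH => x hx; apply: hs; rewrite inE hx orbT.
have [f0 [g0 [hg0 e0]]] := hs a (mem_head _ _).
exists (g * g0); split; first exact: setAM.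
move=> x; rewrite inE => /orP [/eqP ->|hx].
  exists (g * f0); rewrite (tofracM g g0) (tofracM g f0) mulrAC mulrA mulrAC e0.
  by rewrite divfK ?tf_neq0 // mulrC.
rewrite tofracM mulrA mulrAC; apply: SM; last by exists g0.
exact: hgs.
Qed.

Lemma Fc_prime Q : prime_t_ideal R Q -> prime_t_ideal S (Fc Q).
Proof.
move=> [[[[Q0 [QD QM]] QR] [Qp Qpr]] Qt].
have hid : ideal S (Fc Q).
  split; last by move=> x [].
  split; first by split=> //; exact: S0.
  split; first by move=> x y [h1 h2] [h3 h4]; split; [exact: QD| exact: SD].
  by move=> a x ha [h1 h2]; split; [apply: QM => //; exact: R_S| exact: SM].
split.
  split=> //; split; first by move=> [].
  move=> a b ha hb [hab _].
  case: (Qpr a b (R_S ha) (R_S hb) hab) => h; [left|right]; by split.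
have [z [hz nz]] : nonzero_set Q by case: Qt => [[_ [h _]] _].
have [f [g [hg ez]]] := QR z hz.
apply: t_closed_intro; [exact: S0| exact: S1| exact: SD| exact: SM| exact: hid| |].
  exists (tf f); split.
    split; last by exists f.
    have -> : tf f = tf g * z by rewrite ez mulrC divfK ?tf_neq0.
    by apply: QM => //; apply: R_tf.
  by apply: contra nz; rewrite ez => /eqP ->; rewrite mul0r.
move=> J [hJ [s hs]] hJQ x hx.
have hJS : subsetK J S by move=> u /hJQ [].
have hxS := v_integral hJS hx.
split=> //.
pose J' := span_of R s.
have hsQ : forall u, u \in s -> Q u.
  move=> u hu; have hJu : J u by apply/(hs u); exact: (span_mem S0 S1 hu).
  by case: (hJQ u hJu).
have hJ'Q : subsetK J' Q by apply: span_sub => //; split=> //; split.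
apply: (t_closed_elim Qt _ hJ'Q).
  split; last by exists s.
  apply: ideal_frac; [exact: R1| |].
    split; [apply: span_Esub; [exact: R0| exact: RD| exact: RM]| by move=> u /hJ'Q /QR].
  case: hJ => [_ [[w [hw nw]] _]]; exists w; split=> //.
  have := proj1 (hs w) hw; apply: (@span_ind _ S (fun s w => span_of R s w)).
    by apply: span0; exact: R0.
  move=> a s' c w' hc _ IH; apply/span_cons; exists c, w'; split=> //; exact: R_S.
move=> y hy.
have [g1 [hg1 hgs]] := common_den (s := s) (y := y)
  (fun u hu => hy u (span_mem R0 R1 hu)).
have hyg : inv_ideal S J (y * tf g1).
  move=> u hu; apply: (inv_span S0 SD SM (y := y * tf g1) (s := s)); last by apply/hs.
  by move=> u' hu'; apply: hgs.
have [p ep] := hx _ hyg.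
have -> : x * y = tf p / tf g1 by rewrite -ep mulrA mulfK ?tf_neq0.
by exists p, g1.
Qed.

Lemma part2 : tdim_le R S.
Proof.
apply: (@transfer _ _ R S Fc S0 S1 SD SM R0).
- exact: Fc_prime.
- by move=> P Q h x [h1 h2]; split=> //; apply: h.
- move=> P Q [[P0 [PD PM]] PR] [[Q0 [QD QM]] QR] h z hz.
  have [f [g [hg ez]]] := PR z hz.
  have ef : tf f = tf g * z by rewrite ez mulrC divfK ?tf_neq0.
  have : Fc P (tf f) by split; [rewrite ef; apply: PM => //; apply: R_tf| exists f].
  move/h => [hQ _].
  have -> : z = (tf g)^-1 * tf f by rewrite ef mulrA mulVf ?mul1r ?tf_neq0.
  by apply: QM => //; apply: R_inv.
- move=> P hP x; split; first by move=> [/hP].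
  by move=> ->; split; [apply/hP| exact: S0].
Qed.

End Poly.

Lemma frac_dec (T : idomainType) (x : {fraction T}) :
  exists a b : T, b != 0 /\ x = FracField.tofrac a / FracField.tofrac b.
Proof.
elim/quotW: x => r.
exists (\n_r), (\d_r); split; first exact: denom_ratioP.
have hd : FracField.tofrac (\d_r) != 0 by rewrite tofrac_eq0 denom_ratioP.
apply: (mulIf hd); rewrite divfK //.
unlock FracField.tofrac.
have -> : forall a b : {fraction T}, a * b = FracField.mul a b by [].
rewrite -FracField.pi_mul.
apply/eqmodP; rewrite /= FracField.equivfE /FracField.mulf !numden_Ratio ?mulf_neq0 ?denom_ratioP ?oner_neq0 //.
by rewrite !mulr1 mulrC.
Qed.

Lemma cross (T : idomainType) (a b c d : T) : b != 0 -> d != 0 ->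
  FracField.tofrac a / FracField.tofrac b = FracField.tofrac c / FracField.tofrac d ->
  a * d = c * b.
Proof.
move=> hb hd /eqP; rewrite eqr_div ?tofrac_eq0 // -!tofracM tofrac_eq => /eqP //.
Qed.

Lemma cross1 (T : idomainType) (a b c d : T) : b != 0 ->
  FracField.tofrac a / FracField.tofrac b * FracField.tofrac c = FracField.tofrac d ->
  a * c = b * d.
Proof.
move=> hb e; have h := @cross T (a * c) b d 1 hb (oner_neq0 _).
rewrite mulr1 in h; rewrite [b * d]mulrC; apply: h.
by rewrite tofracM mulrAC e tofrac1 divr1.
Qed.

Lemma last_bad (P : nat -> Prop) n : (forall k, (n <= k)%N -> P k) -> (exists k, ~ P k) ->
  exists i, ~ P i /\ forall k, (i < k)%N -> P k.
Proof.
elim: n => [|n IH] hn hex.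
  by case: hex => k hk; case: hk; apply: hn.
case: (classic (P n)) => hPn.
  apply: IH hex => k; rewrite leq_eqVlt => /orP [/eqP <-//|]; exact: hn.
by exists n; split.
Qed.

Lemma dv_sum (T : idomainType) (b : T) n (F : 'I_n -> T) :
  (forall i, exists d, F i = b * d) -> exists e, \sum_i F i = b * e.
Proof.
move=> hF; apply: (big_ind (fun x => exists e, x = b * e)).
- by exists 0; rewrite mulr0.
- by move=> x y [e1 ->] [e2 ->]; exists (e1 + e2); rewrite mulrDr.
- by move=> i _; apply: hF.
Qed.

Lemma coef_div (T : idomainType) (b : T) (u g r : {poly T}) :
  g`_0 = 1 -> u * g = b%:P * r -> forall k, exists d, u`_k = b * d.
Proof.
move=> hg e k; elim/ltn_ind: k => k IH.
have := congr1 (fun p : {poly T} => p`_k) e; rewrite /= coefCM coefM big_ord_recr /= subnn hg mulr1.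
have [e' he] : exists e', \sum_(i < k) u`_(widen_ord (leqnSn k) i) * g`_(k - widen_ord (leqnSn k) i) = b * e'.
  apply: dv_sum => i; have [d hd] := IH i (ltn_ord i).
  by exists (d * g`_(k - i)); rewrite /= hd mulrA.
rewrite he => hk; exists (r`_k - e'); rewrite mulrBr -hk.
by rewrite addrC addrK.
Qed.

Lemma divpoly (T : idomainType) (a b : T) (f : {poly T}) :
  (forall k, exists d, a * f`_k = b * d) -> exists q, a%:P * f = b%:P * q.
Proof.
move=> h.
have ex : forall k, exists d, a * f`_k == b * d by move=> k; have [d hd] := h k; exists d; apply/eqP.
exists (\poly_(k < size f) xchoose (ex k)).
apply/polyP => k; rewrite !coefCM coef_poly.
case: ltnP => hk; first by apply/eqP; exact: (xchooseP (ex k)).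
by rewrite nth_default // !mulr0.
Qed.

Section Part1.
Variable D : idomainType.
Local Notation K1 := {fraction D}.
Local Notation K := {fraction {poly D}}.
Local Notation td := (@FracField.tofrac D).
Local Notation tf := (@FracField.tofrac {poly D}).
Local Notation dom := (@dom_in_frac D).
Local Notation R := (@polyloc_A D).

Lemma dom0 : dom 0. Proof. by exists 0; rewrite tofrac0. Qed.
Lemma dom1 : dom 1. Proof. by exists 1; rewrite tofrac1. Qed.
Lemma domD x y : dom x -> dom y -> dom (x + y).
Proof. by move=> [f ->] [g ->]; exists (f + g); rewrite tofracD. Qed.
Lemma domM x y : dom x -> dom y -> dom (x * y).
Proof. by move=> [f ->] [g ->]; exists (f * g); rewrite tofracM. Qed.

Definition polyQ (Q : K1 -> Prop) (f : {poly D}) := forall k, Q (td f`_k).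
Definition Fe (Q : K1 -> Prop) : K -> Prop :=
  fun x => exists f g, polyQ Q f /\ setA g /\ x = tf f / tf g.

Section IdealQ.
Variable Q : K1 -> Prop.
Hypothesis Q0 : Q 0.
Hypothesis QD : forall x y, Q x -> Q y -> Q (x + y).
Hypothesis QM : forall a x, dom a -> Q x -> Q (a * x).

Lemma qM (a b : D) : Q (td b) -> Q (td (a * b)).
Proof. by move=> h; rewrite tofracM; apply: QM => //; exists a. Qed.
Lemma qMr (a b : D) : Q (td a) -> Q (td (a * b)).
Proof. by rewrite mulrC; apply: qM. Qed.
Lemma qN (a : D) : Q (td a) -> Q (td (- a)).
Proof. by move=> h; rewrite -mulN1r; apply: qM. Qed.
Lemma qD (a b : D) : Q (td a) -> Q (td b) -> Q (td (a + b)).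
Proof. by move=> h1 h2; rewrite tofracD; apply: QD. Qed.
Lemma qsum n (F : 'I_n -> D) : (forall i, Q (td (F i))) -> Q (td (\sum_i F i)).
Proof.
move=> hF; apply: (big_ind (fun x => Q (td x))) => //.
by move=> x y; apply: qD.
Qed.

Lemma polyQ0 : polyQ Q 0. Proof. by move=> k; rewrite coef0 tofrac0. Qed.
Lemma polyQD f g : polyQ Q f -> polyQ Q g -> polyQ Q (f + g).
Proof. by move=> h1 h2 k; rewrite coefD; apply: qD. Qed.
Lemma polyQMl f g : polyQ Q g -> polyQ Q (f * g).
Proof. by move=> h k; rewrite coefM; apply: qsum => i; apply: qM. Qed.
Lemma polyQMr f g : polyQ Q f -> polyQ Q (f * g).
Proof. by move=> h; rewrite mulrC; apply: polyQMl. Qed.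
Lemma polyQC c : Q (td c) -> polyQ Q c%:P.
Proof. by move=> h k; rewrite coefC; case: eqP => _ //; rewrite tofrac0. Qed.

Hypothesis Qp : ~ Q 1.
Hypothesis Qpr : forall a b, dom a -> dom b -> Q (a * b) -> Q a \/ Q b.

Lemma qpr (a b : D) : Q (td (a * b)) -> Q (td a) \/ Q (td b).
Proof. by rewrite tofracM => h; apply: Qpr => //; [exists a| exists b]. Qed.

Lemma polyQ_prime f g : polyQ Q (f * g) -> polyQ Q f \/ polyQ Q g.
Proof.
move=> hfg; apply: NNPP => hn.
have hf : ~ polyQ Q f by move=> h; apply: hn; left.
have hg : ~ polyQ Q g by move=> h; apply: hn; right.
have [i [hi hi']] : exists i, ~ Q (td f`_i) /\ forall k, (i < k)%N -> Q (td f`_k).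
  apply: (@last_bad _ (size f)).
    by move=> k hk; rewrite nth_default // tofrac0.
  by apply: NNPP => h; apply: hf => k; apply: NNPP => hk; apply: h; exists k.
have [j [hj hj']] : exists j, ~ Q (td g`_j) /\ forall k, (j < k)%N -> Q (td g`_k).
  apply: (@last_bad _ (size g)).
    by move=> k hk; rewrite nth_default // tofrac0.
  by apply: NNPP => h; apply: hg => k; apply: NNPP => hk; apply: h; exists k.
have := hfg (i + j)%N; rewrite coefM.
have hio : (i < (i + j).+1)%N by rewrite ltnS leq_addr.
rewrite (bigD1 (Ordinal hio)) //= addKn => htot.
have hrest : Q (td (\sum_(l < (i + j).+1 | l != Ordinal hio) f`_l * g`_(i + j - l))).
  apply: (big_ind (fun x => Q (td x))) => //; first by move=> x y; apply: qD.
  move=> l hl; case: (ltngtP l i) => h.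
  - by apply: qM; apply: hj'; lia.
  - by apply: qMr; apply: hi'.
  - by move: hl; rewrite eq_sym; case/negP; apply/eqP; apply: val_inj.
have : Q (td (f`_i * g`_j)).
  have -> : f`_i * g`_j = (f`_i * g`_j + \sum_(l < (i + j).+1 | l != Ordinal hio) f`_l * g`_(i + j - l))
       - \sum_(l < (i + j).+1 | l != Ordinal hio) f`_l * g`_(i + j - l) by rewrite addrK.
  by apply: qD => //; apply: qN.
by case/qpr.
Qed.

End IdealQ.

Lemma fgs_of (Q : K1 -> Prop) (s : seq K) : (forall u, u \in s -> Fe Q u) ->
  exists fgs : seq ({poly D} * {poly D}),
    s = map (fun p => tf p.1 / tf p.2) fgs /\
    forall p, p \in fgs -> polyQ Q p.1 /\ setA p.2.
Proof.
elim: s => [|a s IH] hs; first by exists [::].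
have [fgs [-> hf]] : exists fgs : seq ({poly D} * {poly D}),
    s = map (fun p => tf p.1 / tf p.2) fgs /\
    forall p, p \in fgs -> polyQ Q p.1 /\ setA p.2.
  by apply: IH => u hu; apply: hs; rewrite inE hu orbT.
have [f [g [hf0 [hg ->]]]] := hs a (mem_head _ _).
exists ((f, g) :: fgs); split=> //.
by move=> p; rewrite inE => /orP [/eqP ->|/hf].
Qed.

Lemma tf_setA_eq (g : {poly D}) : setA g -> g`_0 = 1.
Proof. by rewrite /setA horner_coef0. Qed.

Lemma Fe_prime Q : prime_t_ideal dom Q -> prime_t_ideal R (Fe Q).
Proof.
move=> [[[[Q0 [QD QM]] QE] [Qp Qpr]] Qt].
have QEsub : Esubmodule dom Q by split=> //; split.
have hsubR : subsetK (Fe Q) R by move=> x [f [g [_ [hg ->]]]]; exists f, g.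
have hid : ideal R (Fe Q).
  split=> //; split.
    exists 0, 1; split; first exact: polyQ0.
    by split; [exact: setA1| rewrite tofrac0 mul0r].
  split.
    move=> x y [f1 [g1 [hf1 [hg1 ->]]]] [f2 [g2 [hf2 [hg2 ->]]]].
    exists (f1 * g2 + f2 * g1), (g1 * g2); split.
      by apply: polyQD => //; apply: polyQMr.
    split; first exact: setAM.
    rewrite addf_div ?tf_neq0 //.
    by rewrite tofracD (tofracM f1 g2) (tofracM f2 g1) (tofracM g1 g2).
  move=> a x [f1 [g1 [hg1 ->]]] [f2 [g2 [hf2 [hg2 ->]]]].
  exists (f1 * f2), (g1 * g2); split; first exact: polyQMl.
  split; first exact: setAM.
  by rewrite (tofracM f1 f2) (tofracM g1 g2) mulf_div.
have [z [hz nz]] : nonzero_set Q by case: Qt => [[_ [h _]] _].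
have [c ec] := QE z hz.
split.
  split=> //; split.
    move=> [f [g [hf [hg e1]]]].
    have e3 : g = f.
      by apply/eqP; rewrite -tofrac_eq; apply/eqP; rewrite -[tf g]mul1r e1 divfK ?tf_neq0.
    apply: Qp; have := hf 0%N; by rewrite -e3 tf_setA_eq // tofrac1.
  move=> a b [f1 [g1 [hg1 ->]]] [f2 [g2 [hg2 ->]]] [f [g [hf [hg e]]]].
  rewrite mulf_div -(tofracM f1 f2) -(tofracM g1 g2) in e.
  have e' := cross (mulf_neq0 (setA_neq0 hg1) (setA_neq0 hg2)) (setA_neq0 hg) e.
  have hprod : polyQ Q (f1 * f2 * g).
    by rewrite e'; apply: polyQMr.
  have [h12|h3] := polyQ_prime Q0 QD QM Qpr hprod.
    have [h1|h2] := polyQ_prime Q0 QD QM Qpr h12.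
      by left; exists f1, g1.
    by right; exists f2, g2.
  by exfalso; apply: Qp; have := h3 0%N; rewrite tf_setA_eq // tofrac1.
apply: t_closed_intro; [exact: R0| exact: R1| exact: RD| exact: RM| exact: hid| |].
  exists (tf c%:P / tf 1); split.
    exists c%:P, 1; split; [apply: (polyQC Q0); by rewrite -ec| split=> //; exact: setA1].
  rewrite tofrac1 divr1 tofrac_eq0 polyC_eq0; apply: contra nz => /eqP c0.
  by rewrite ec c0 tofrac0.
move=> J [hJ [s hs]] hJF x hx.
have hJR : subsetK J R by move=> u /hJF /hsubR.
have [h [g [hg ex]]] := v_integral hJR hx.
have hsF : forall u, u \in s -> Fe Q u.
  by move=> u hu; apply: hJF; apply/(hs u); exact: (span_mem (R0 D) (R1 D) hu).
have [fgs [es hfgs]] := fgs_of hsF.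
pose cs := flatten (map (fun p : {poly D} * {poly D} => map td (polyseq p.1)) fgs).
have hcs : forall c, c \in cs -> exists p k, p \in fgs /\ c = td p.1`_k.
  move=> c' /flattenP [l /mapP [p hp ->] /mapP [c'' hc'' ->]].
  by exists p, (index c'' p.1); split=> //; rewrite nth_index.
have hcsQ : forall c, c \in cs -> Q c.
  by move=> c' /hcs [p [k [hp ->]]]; exact: (proj1 (hfgs p hp)) k.
have hcs_in : forall p k, p \in fgs -> (k < size p.1)%N -> td p.1`_k \in cs.
  move=> p k hp hk; apply/flattenP; exists (map td p.1).
    by apply/mapP; exists p.
  by apply: map_f; exact: mem_nth.
pose Ic := span_of dom cs.
have hIcQ : subsetK Ic Q := span_sub QEsub hcsQ.
have hIc : fg_frac_ideal dom Ic.
  split; last by exists cs.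
  apply: ideal_frac; first exact: dom1.
    by split; [exact: (span_Esub dom0 domD domM)| move=> u /hIcQ /QE].
  apply: NNPP => hn.
  have hall : forall c, c \in cs -> c = 0.
    move=> c' hc; apply: NNPP => hc0; apply: hn; exists c'; split.
      exact: (span_mem dom0 dom1 hc).
    by apply/eqP.
  have hz0 : forall p, p \in fgs -> p.1 = 0.
    move=> p hp; apply/eqP; apply: contraT => hnz.
    have hsz : (0 < size p.1)%N by rewrite size_poly_gt0.
    have hlt : ((size p.1).-1 < size p.1)%N by rewrite ltn_predL.
    have := hall _ (hcs_in p (size p.1).-1 hp hlt).
    by move/eqP; rewrite tofrac_eq0 -lead_coefE lead_coef_eq0 (negbTE hnz).
  have hs0 : forall u, u \in s -> @zero_set K u.
    move=> u; rewrite es => /mapP [p hp ->]; rewrite (hz0 p hp) tofrac0 mul0r //.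
  case: hJ => [_ [[w [hw nw]] _]].
  have : @zero_set K w.
    apply: (span_sub (E := R) _ hs0); last exact/hs.
    by case: (ideal_zero (R0 D)).
  by move=> w0; move: nw; rewrite w0 eqxx.
have hv : forall k, v_ideal dom Ic (td h`_k).
  move=> k y hy.
  have [a [b [hb ey]]] := frac_dec y.
  have hdiv : forall p, p \in fgs -> forall k, exists d, a * p.1`_k = b * d.
    move=> p hp k'; case: (ltnP k' (size p.1)) => hk.
      have [d ed] := hy _ (span_mem dom0 dom1 (hcs_in p k' hp hk)).
      by exists d; apply: cross1 => //; rewrite -ey.
    by exists 0; rewrite nth_default // !mulr0.
  pose Y := tf a%:P / tf b%:P.
  have hbP : tf b%:P != 0 by rewrite tofrac_eq0 polyC_eq0.
  have hY : inv_ideal R J Y.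
    move=> u hu; apply: (inv_span (R0 D) (@RD D) (@RM D) (y := Y) (s := s) _ (proj1 (hs u) hu)).
    move=> u'; rewrite es => /mapP [p hp ->].
    have [q eq] := divpoly (hdiv p hp); have [_ hg2] := hfgs p hp.
    exists q, p.2; split=> //.
    rewrite /Y mulf_div -(tofracM a%:P p.1) eq (tofracM b%:P q) -mulf_div.
    by rewrite divff // mul1r.
  have [r [g' [hg' er]]] := hx Y hY.
  rewrite ex /Y mulf_div -(tofracM h a%:P) -(tofracM g b%:P) in er.
  have hbP0 : b%:P != 0 by rewrite polyC_eq0.
  have e2 := cross (mulf_neq0 (setA_neq0 hg) hbP0) (setA_neq0 hg') er.
  have e3 : (h * a%:P) * g' = b%:P * (r * g) by rewrite e2 [g * b%:P]mulrC mulrCA.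
  have [d hd] := coef_div (tf_setA_eq hg') e3 k.
  rewrite coefMC in hd.
  exists d; rewrite ey mulrA -tofracM hd tofracM mulrC mulrA mulVf ?mul1r //.
  by rewrite tofrac_eq0.
have hpolyQ : polyQ Q h by move=> k; exact: (t_closed_elim Qt hIc hIcQ (hv k)).
by exists h, g.
Qed.


Lemma part1 : tdim_le dom R.
Proof.
apply: (@transfer _ _ dom R Fe (R0 D) (R1 D) (@RD D) (@RM D) dom0).
- exact: Fe_prime.
- by move=> P Q h x [f [g [hf [hg ->]]]]; exists f, g; split=> // k; apply: h.
- move=> P Q [[P0 [PD PM]] PE] [[Q0 [QD QM]] QE] h z hz.
  have [d ed] := PE z hz.
  have hPd : Fe P (tf d%:P / tf 1).
    exists d%:P, 1; split; first by apply: (polyQC P0); rewrite -ed.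
    by split=> //; exact: setA1.
  have [f [g [hf [hg e]]]] := h _ hPd.
  have e2 := cross (oner_neq0 _) (setA_neq0 hg) e.
  have := congr1 (fun p : {poly D} => p`_0) e2.
  rewrite /= coefCM mulr1 tf_setA_eq // mulr1 => ed0.
  by rewrite ed ed0; apply: hf.
- move=> P hP x; split.
    move=> [f [g [hf [hg ->]]]].
    have -> : f = 0.
      apply/polyP => k; rewrite coef0; apply/eqP; rewrite -tofrac_eq0; apply/eqP.
      exact/hP/hf.
    by rewrite tofrac0 mul0r.
  move=> ->; exists 0, 1; split.
    by move=> k; rewrite coef0 tofrac0; apply/hP.
  by split; [exact: setA1| rewrite tofrac0 mul0r].
Qed.

End Part1.

Theorem mainTheorem14 (D : idomainType) :
  tdim_le (@dom_in_frac D) (@polyloc_A D) /\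
  tdim_le (@polyloc_A D) (@polyring_in_frac D).
Proof. split; [exact: part1| exact: part2]. Qed.
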